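(* Let $K$ be a countably infinite complete multipartite graph. (i) If $K$ has at least two infinite parts, or infinitely many vertices lying in finite parts, then $K$ is not Ramsey-dense: there is a 2-coloring of the edges of $K_\mathbb{N}$ in which every monochromatic copy of $K$ has upper density $0$. (ii) If $K$ has exactly one infinite part and exactly $n\ge1$ vertices lying in finite parts, then $\frac{1}{2^{2n-1}}\le \mathrm{Rd}_2(K)\le\frac{1}{2^n}$.
   Context: $K_{\mathbb{N}}$ is the complete graph on $\mathbb{N}=\{1,2,\dots\}$; a copy of $K$ is a subgraph of $K_\mathbb{N}$ isomorphic to $K$, monochromatic if all its edges have the same color. $\overline{d}(V)=\limsup_{t\to\infty}|V\cap\{1,\dots,t\}|/t$. A graph is Ramsey-dense if in every 2-coloring of the edges of $K_\mathbb{N}$ there is a monochromatic copy of it with positive upper density. For a 2-coloring $\varphi$, $\mathrm{Rd}_\varphi(K)$ is the supremum of the upper densities of monochromatic copies of $K$, and $\mathrm{Rd}_2(K)=\inf_\varphi\mathrm{Rd}_\varphi(K)$. *)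

(* Defs.v *)
From HB Require Import structures.
From mathcomp Require Import all_boot all_order all_algebra.
From mathcomp Require Import all_classical all_reals all_analysis.
Set Implicit Arguments. Unset Strict Implicit. Unset Printing Implicit Defensive.
Import Order.TTheory GRing.Theory Num.Theory.
Local Open Scope classical_set_scope.
Local Open Scope ring_scope.

(* A countably infinite complete multipartite graph K is represented on the
   vertex set nat by a part labelling [p : nat -> nat]: vertices u, v are
   adjacent iff [p u <> p v]. *)
Definition part (p : nat -> nat) (i : nat) : set nat := [set v | p v = i].

Definition two_infinite_parts (p : nat -> nat) : Prop :=
  exists i j, i <> j /\ infinite_set (part p i) /\ infinite_set (part p j).

Definition exactly_one_infinite_part (p : nat -> nat) : Prop :=
  exists i, infinite_set (part p i) /\
    forall j, infinite_set (part p j) -> j = i.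

Definition finite_part_vertices (p : nat -> nat) : set nat :=
  [set v | finite_set (part p (p v))].

(* A 2-colouring of the edges of K_N (N = {1,2,...}): the edge {x,y} (x <> y)
   gets colour [c (minn x y) (maxn x y)]; every colouring arises this way. *)
Definition coloring := nat -> nat -> bool.
Definition ecol (c : coloring) (x y : nat) : bool := c (minn x y) (maxn x y).

(* A copy of K in K_N is the image of an embedding [f] of the vertices of K
   into N = {1,2,...}; its vertex set is [range f]. It is monochromatic if all
   images of edges of K get the same colour. *)
Definition copy (f : nat -> nat) : Prop :=
  injective f /\ (forall v, (0 < f v)%N).

Definition mono_copy (p : nat -> nat) (c : coloring) (f : nat -> nat) : Prop :=
  copy f /\ exists b : bool, forall u v, p u <> p v -> ecol c (f u) (f v) = b.

Definition dens_seq {R : realType} (V : set nat) (t : nat) : R :=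
  (\sum_(1 <= i < t.+1) (if `[< V i >] then 1 else 0 : R)) / t%:R.

Definition upper_density {R : realType} (V : set nat) : \bar R :=
  limn_esup (fun t => (@dens_seq R V t)%:E).

Definition Rd_phi {R : realType} (p : nat -> nat) (c : coloring) : \bar R :=
  ereal_sup [set @upper_density R (range f) | f in mono_copy p c].

Definition Rd2 {R : realType} (p : nat -> nat) : \bar R :=
  ereal_inf [set @Rd_phi R p c | c in [set: coloring]].

(* Main.v *)
Require Import Defs.
From HB Require Import structures.
From mathcomp Require Import all_boot all_order all_algebra.
From mathcomp Require Import all_classical all_reals all_analysis.
From mathcomp Require Import zify lra.
Import Order.TTheory GRing.Theory Num.Theory.
Local Open Scope classical_set_scope.
Local Open Scope ring_scope.

Local Close Scope ring_scope.
Local Close Scope classical_set_scope.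
Lemma bit_shift r m j : (j < m)%N -> odd ((r + 2 ^ m) %/ 2 ^ j) = odd (r %/ 2 ^ j).
Proof.
move=> jm.
rewrite divnDr; last by rewrite dvdn_exp2l // (ltnW jm).
rewrite -(expnB (isT : 0 < 2)) ?(ltnW jm).
rewrite oddD oddX.
have -> : (m - j == 0) = false by apply/eqP; lia.
by rewrite addbF.
done. Qed.
Lemma bit_top r m : (r < 2 ^ m)%N -> odd (r %/ 2 ^ m) = false /\ odd ((r + 2 ^ m) %/ 2 ^ m) = true.
Proof.
move=> rm; rewrite divnDr ?dvdnn // divn_small // divnn expn_gt0 /=.
by split.
Qed.
Definition sb (P : seq nat) (b : bool) (y : nat) : bool :=
  all (fun j => odd (y %/ 2 ^ j) == b) P.
Lemma size_lt P m : uniq P -> all (fun j => j < m)%N P -> (size P <= m)%N.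
Proof.
move=> uP /allP H; rewrite -(size_iota 0 m); apply: uniq_leq_size => // j /H.
by rewrite mem_iota.
Qed.
Lemma sb_shift P b r m : all (fun j => j < m)%N P -> sb P b (r + 2 ^ m) = sb P b r.
Proof.
move=> /allP H; apply: eq_in_all => j /H jm /=; by rewrite bit_shift.
Qed.

Lemma block_count P b m : uniq P -> all (fun j => j < m)%N P ->
  (\sum_(0 <= r < 2 ^ m) sb P b r = 2 ^ (m - size P))%N.
Proof.
elim: m P => [|m IH] P uP aP.
  case: P uP aP => [|j P] //= _ _; by rewrite expn0 big_nat1.
rewrite expnS mul2n -addnn (@big_cat_nat _ _ _ (2 ^ m)) ?leq_addr //=.
rewrite -{2}(add0n (2 ^ m)) big_addn addnK.
have [mP | mP] := boolP (m \in P).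
- set P' := rem m P.
  have uP' : uniq P' by exact: rem_uniq.
  have aP' : all (fun j => j < m)%N P'.
    apply/allP => j; rewrite /P' mem_rem_uniq // inE => /andP[jm jP].
    have := allP aP j jP; move: jm => /eqP; lia.
  have Hs : forall y, sb P b y = (odd (y %/ 2 ^ m) == b) && sb P' b y.
    by move=> y; rewrite /sb (perm_all _ (perm_to_rem mP)).
  have sP : size P' = (size P).-1 by rewrite size_rem.
  have sP0 : (0 < size P)%N by case: (P) mP.
  have E1 : (\sum_(0 <= r < 2 ^ m) sb P b r = \sum_(0 <= r < 2 ^ m) ((~~ b) && sb P' b r))%N.
    apply: eq_big_nat => r /andP[_ rm]; rewrite Hs; by have [-> _] := bit_top r m rm; case: (b).
  have E2 : (\sum_(0 <= r < 2 ^ m) sb P b (r + 2 ^ m) = \sum_(0 <= r < 2 ^ m) (b && sb P' b r))%N.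
    apply: eq_big_nat => r /andP[_ rm]; rewrite Hs sb_shift //; by have [_ ->] := bit_top r m rm; case: (b).
  rewrite E1 E2.
  have -> : (m.+1 - size P = m - size P')%N by rewrite sP; lia.
  rewrite -(IH P' uP' aP'); destruct b.
    rewrite big1 ?add0n //.
  by rewrite [X in (_ + X)%N]big1 ?addn0.
- have aP' : all (fun j => j < m)%N P.
    apply/allP => j jP; have := allP aP j jP; have : j != m by apply: contraNneq mP => <-.
    move/eqP; lia.
  have E2 : (\sum_(0 <= r < 2 ^ m) sb P b (r + 2 ^ m) = \sum_(0 <= r < 2 ^ m) sb P b r)%N.
    by apply: eq_big_nat => r _; rewrite sb_shift.
  rewrite E2.
  rewrite IH // addnn -mul2n -expnS; congr (2 ^ _).
  by rewrite subSn // (size_lt _ _ uP aP').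
Qed.

Lemma sb_shiftq P b r m q : all (fun j => j < m)%N P -> sb P b (r + q * 2 ^ m) = sb P b r.
Proof.
move=> aP; elim: q => [|q IH]; first by rewrite mul0n addn0.
by rewrite mulSn addnCA addnC sb_shift // addnC.
Qed.

Lemma period_count P b m q : uniq P -> all (fun j => j < m)%N P ->
  (\sum_(0 <= r < q * 2 ^ m) sb P b r = q * 2 ^ (m - size P))%N.
Proof.
move=> uP aP; elim: q => [|q IH]; first by rewrite !mul0n big_geq.
rewrite mulSn addnC (@big_cat_nat _ _ _ (q * 2 ^ m)) ?leq_addr //= IH.
rewrite -{1}(add0n (q * 2 ^ m)) big_addn addKn.
have E : (\sum_(0 <= r < 2 ^ m) sb P b (r + q * 2 ^ m) = \sum_(0 <= r < 2 ^ m) sb P b r)%N.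
  by apply: eq_big_nat => r _; rewrite sb_shiftq.
by rewrite E block_count // mulSn addnC.
Qed.

Lemma sum_mono (F : nat -> nat) t N : (t <= N)%N ->
  (\sum_(0 <= r < t) F r <= \sum_(0 <= r < N) F r)%N.
Proof.
move=> tN; rewrite (@big_cat_nat _ _ _ t 0 N) //=; exact: leq_addr.
Qed.

Lemma sb_count P b m t : uniq P -> all (fun j => j < m)%N P ->
  ((\sum_(1 <= i < t.+1) sb P b i) * 2 ^ (size P) <= t + 1 + 2 ^ m)%N.
Proof.
move=> uP aP.
have m0 : (0 < 2 ^ m)%N by rewrite expn_gt0.
set q := (t.+1 %/ 2 ^ m)%N.
have H1 : (\sum_(1 <= i < t.+1) sb P b i <= \sum_(0 <= r < q.+1 * 2 ^ m) sb P b r)%N.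
  apply: leq_trans (@sum_mono (fun r => nat_of_bool (sb P b r)) _ _ (ltnW (ltn_ceil t.+1 m0))).
  rewrite (@big_cat_nat _ _ _ 1 0 t.+1) //=; exact: leq_addl.
rewrite period_count // in H1.
apply: leq_trans (leq_mul H1 (leqnn _)) _.
rewrite -mulnA -expnD subnK ?(size_lt _ _ uP aP) // mulSn addnC.
have := leq_trunc_div t.+1 (2 ^ m); rewrite -/q; lia.
Qed.

Local Open Scope classical_set_scope.
Local Open Scope ring_scope.

Section Dens.
Variable R : realType.
Local Notation u V := (fun t => (@dens_seq R V t)%:E).

Lemma udE V : @upper_density R V =
  ereal_inf (range (esups (u V))).
Proof.
rewrite /upper_density limn_esup_lim; apply: cvg_lim => //.
exact: cvg_esups_inf.
Qed.

Lemma ud_le V (x : \bar R) : (exists N, forall m, (N <= m)%N -> ((dens_seq V m)%:E <= x)%E) ->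
  (upper_density V <= x)%E.
Proof.
move=> [N HN]; rewrite udE; apply: le_trans (ereal_inf_lbound _) _; first by exists N.
by apply: ub_ereal_sup => _ [m /= Hm <-]; apply: HN.
Qed.

Lemma ud_lt V (x : \bar R) : (upper_density V < x)%E ->
  exists N, forall m, (N <= m)%N -> ((dens_seq V m)%:E < x)%E.
Proof.
rewrite udE => /ereal_inf_lt [_ [N _ <-] HN]; exists N => m Hm.
apply: le_lt_trans HN; apply: ereal_sup_ubound; by exists m.
Qed.

Lemma ud_ge V (x : \bar R) : (forall N, exists2 m, (N <= m)%N & (x <= (dens_seq V m)%:E)%E) ->
  (x <= upper_density V)%E.
Proof.
move=> H; rewrite udE; apply: le_ereal_inf_tmp => _ [N _ <-].
have [m Hm Hx] := H N; apply: le_trans Hx _; apply: ereal_sup_ubound; by exists m.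
Qed.

End Dens.

Definition cnt (V : set nat) (t : nat) : nat := (\sum_(1 <= i < t.+1) `[< V i >])%N.

Section Dens2.
Variable R : realType.

Lemma densE V t : @dens_seq R V t = (cnt V t)%:R / t%:R.
Proof.
rewrite /dens_seq /cnt natr_sum; congr (_ / _); apply: eq_bigr => i _.
by case: asboolP.
Qed.

Lemma ud_cnt V (a C : R) : (forall t, (cnt V t)%:R <= a * t%:R + C) ->
  (@upper_density R V <= a%:E)%E.
Proof.
move=> H; apply/lee_addgt0Pr => e e0; apply: ud_le.
exists (Num.truncn `|C / e|).+1 => m Hm; rewrite lee_fin densE.
have m0 : 0 < m%:R :> R by rewrite ltr0n (leq_trans _ Hm).
have HN : `|C / e| < m%:R.
  apply: lt_le_trans (_ : ((Num.truncn `|C / e|).+1)%:R <= _); last by rewrite ler_nat.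
  by case/andP: (Num.Theory.truncn_itv (normr_ge0 (C / e))).
rewrite ler_pdivrMr //.
apply: le_trans (H m) _; rewrite mulrDl lerD2l.
have : C / e < m%:R by apply: le_lt_trans (ler_norm _) HN.
rewrite ltr_pdivrMr // => /ltW; by rewrite mulrC.
Qed.


Lemma cnt_sub V W Z t : V `<=` W `|` Z -> (cnt V t <= cnt W t + cnt Z t)%N.
Proof.
move=> H; rewrite /cnt -big_split /=; apply: leq_sum => i _.
case: asboolP => // /H [] Hi; rewrite (asboolT Hi) //; lia.
Qed.

Lemma cnt_le M t : (cnt [set y | (y <= M)%N] t <= M)%N.
Proof.
suff : (cnt [set y | (y <= M)%N] t <= minn t M)%N by move/leq_trans; apply; exact: geq_minr.
set V := [set y | (y <= M)%N].
elim: t => [|t IH]; first by rewrite /cnt big_geq.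
rewrite /cnt big_nat_recr //= -/(cnt V t).
case: asboolP => /= H.
  have : (t.+1 <= M)%N := H. move: IH; lia.
have : ~~ (t.+1 <= M)%N by apply/negP.
move: IH; lia.
Qed.

Lemma cnt_sb P b m t : uniq P -> all (fun j => j < m)%N P ->
  (cnt (fun y => sb P b y) t * 2 ^ size P <= t + 1 + 2 ^ m)%N.
Proof.
move=> uP aP; rewrite /cnt.
have -> : (\sum_(1 <= i < t.+1) `[< sb P b i >] = \sum_(1 <= i < t.+1) sb P b i)%N.
  by apply: eq_bigr => i _; rewrite asboolb.
exact: sb_count.
Qed.

Lemma cnt_sb_real P b m t : uniq P -> all (fun j => j < m)%N P ->
  (cnt (fun y => sb P b y) t)%:R <= (1 / 2 ^+ size P) * t%:R + (1 + 2 ^+ m) :> R.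
Proof.
move=> uP aP; have := cnt_sb P b m t uP aP.
rewrite -(ler_nat R) natrM !natrD !natrX => H.
have s0 : 0 < 2 ^+ size P :> R by rewrite exprn_gt0.
rewrite -ler_pdivlMr // in H; apply: le_trans H _.
rewrite mul1r -addrA mulrDl (mulrC _^-1) lerD2l.
rewrite ler_pdivrMr //.
have h1 : 1 <= 2 ^+ size P :> R by rewrite exprn_ege1 // ler1n.
have h2 : 0 <= 2 ^+ m :> R by rewrite exprn_ge0.
nra.
Qed.


Lemma cnt_le_t V t : (cnt V t <= t)%N.
Proof.
rewrite /cnt; apply: leq_trans (_ : \sum_(1 <= i < t.+1) 1 <= t)%N.
  by apply: leq_sum => i _; case: asboolP.
by rewrite big_const_nat iter_addn_0 mul1n subn1.
Qed.

Lemma dens_ge0 V m : 0 <= @dens_seq R V m.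
Proof. by rewrite densE divr_ge0. Qed.

Lemma dens_le1 V m : @dens_seq R V m <= 1.
Proof.
rewrite densE; have [->|m0] := eqVneq m 0%N; first by rewrite invr0 mulr0.
by rewrite ler_pdivrMr ?mul1r ?ler_nat ?cnt_le_t // ltr0n lt0n.
Qed.

Lemma ud_fin V : @upper_density R V \is a fin_num.
Proof.
rewrite fin_numElt; apply/andP; split.
  apply: lt_le_trans (ltNyr 0) _; apply: ud_ge => N; exists N => //.
  by rewrite lee_fin dens_ge0.
apply: le_lt_trans (ltry 1); apply: ud_le; exists 0%N => m _.
by rewrite lee_fin dens_le1.
Qed.

Definition ud V : R := fine (@upper_density R V).

Lemma udRE V : @upper_density R V = (ud V)%:E.
Proof. by rewrite /ud fineK // ud_fin. Qed.

Lemma ud_ge0 V : 0 <= ud V.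
Proof.
rewrite -lee_fin -udRE; apply: ud_ge => N; exists N => //.
by rewrite lee_fin dens_ge0.
Qed.

Lemma ud_ltR V x : ud V < x -> exists N, forall m, (N <= m)%N -> @dens_seq R V m < x.
Proof.
rewrite -lte_fin -udRE => /ud_lt [N HN]; exists N => m /HN; by rewrite lte_fin.
Qed.

Lemma ud_leR V x : (exists N, forall m, (N <= m)%N -> @dens_seq R V m <= x) -> ud V <= x.
Proof.
move=> [N HN]; rewrite -lee_fin -udRE; apply: ud_le; exists N => m /HN.
by rewrite lee_fin.
Qed.

Lemma ud_cntR V (a C : R) : (forall t, (cnt V t)%:R <= a * t%:R + C) -> ud V <= a.
Proof. by move=> H; rewrite -lee_fin -udRE; apply: ud_cnt H. Qed.

Lemma ud_small M : ud [set y | (y <= M)%N] = 0.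
Proof.
apply/eqP; rewrite eq_le ud_ge0 andbT; apply: (@ud_cntR _ 0 M%:R) => t.
by rewrite mul0r add0r ler_nat cnt_le.
Qed.

Lemma dens_sub3 V A B C m : V `<=` A `|` B `|` C ->
  @dens_seq R V m <= dens_seq A m + dens_seq B m + dens_seq C m.
Proof.
move=> H; rewrite !densE -!mulrDl ler_wpM2r // -!natrD ler_nat.
have H1 : V `<=` A `|` (B `|` C) by move=> x /H; rewrite setUA.
apply: leq_trans (cnt_sub _ _ _ m H1) _; rewrite -addnA leq_add2l.
apply: cnt_sub => x; exact.
Qed.

Lemma ud_sub3 V A B C : V `<=` A `|` B `|` C -> ud V <= ud A + ud B + ud C.
Proof.
move=> H; apply/ler_addgt0Pr => e e0.
have e3 : 0 < e / 3 by rewrite divr_gt0.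
have [N1 H1] : exists N, forall m, (N <= m)%N -> dens_seq A m < ud A + e / 3.
  by apply: ud_ltR; rewrite ltrDl.
have [N2 H2] : exists N, forall m, (N <= m)%N -> dens_seq B m < ud B + e / 3.
  by apply: ud_ltR; rewrite ltrDl.
have [N3 H3] : exists N, forall m, (N <= m)%N -> dens_seq C m < ud C + e / 3.
  by apply: ud_ltR; rewrite ltrDl.
apply: ud_leR; exists (maxn N1 (maxn N2 N3)) => m Hm.
have h1 := H1 m (leq_trans (leq_maxl _ _) Hm).
have h2 := H2 m (leq_trans (leq_maxl _ _) (leq_trans (leq_maxr _ _) Hm)).
have h3 := H3 m (leq_trans (leq_maxr _ _) (leq_trans (leq_maxr _ _) Hm)).
have := dens_sub3 _ _ _ _ m H; lra.
Qed.

Lemma ud_sub V W : V `<=` W -> ud V <= ud W.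
Proof.
move=> H; have : V `<=` W `|` set0 `|` set0 by move=> x /H; left; left.
move/ud_sub3; have -> : ud set0 = 0.
  apply/eqP; rewrite eq_le ud_ge0 andbT; apply: (@ud_cntR _ 0 0) => t.
  suff -> : cnt set0 t = 0%N by rewrite mul0r addr0.
  by rewrite /cnt; apply: big1 => i _; case: asboolP.
by rewrite !addr0.
Qed.


Lemma ud_bounded V M : V `<=` [set y | (y <= M)%N] -> ud V = 0.
Proof.
move=> H; apply/eqP; rewrite eq_le ud_ge0 andbT -(ud_small M); exact: ud_sub.
Qed.

Lemma ud0 : ud set0 = 0.
Proof. by apply: (@ud_bounded _ 0) => x []. Qed.

Lemma ud_pos_infinite V : 0 < ud V -> infinite_set V.
Proof.
move=> H /finite_seqP [s Vs]; move: H; rewrite (@ud_bounded _ (\max_(x <- s) x)) ?ltxx //.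
move=> x; rewrite Vs /= => xs; exact: leq_bigmax_seq.
Qed.

Lemma ud_positives : ud [set i | (0 < i)%N] = 1.
Proof.
apply/eqP; rewrite eq_le; apply/andP; split.
  apply: ud_leR; exists 0%N => m _; exact: dens_le1.
rewrite -lee_fin -udRE; apply: ud_ge => N; exists N.+1 => //.
rewrite densE.
have -> : cnt [set i | (0 < i)%N] N.+1 = N.+1.
  rewrite /cnt (@eq_big_nat _ _ _ _ _ _ (fun _ => 1%N)); last first.
    by move=> i /andP[i0 _]; rewrite asboolT.
  by rewrite big_const_nat iter_addn_0 mul1n subn1.
by rewrite divff // pnatr_eq0.
Qed.

Lemma ud_sb1 V M P b m : uniq P -> all (fun j => j < m)%N P ->
  V `<=` [set y | (y <= M)%N] `|` (fun y => sb P b y) -> ud V <= 1 / 2 ^+ size P.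
Proof.
move=> uP aP H.
have H' : V `<=` [set y | (y <= M)%N] `|` (fun y => sb P b y) `|` set0 by move=> x /H; left.
apply: le_trans (ud_sub3 _ _ _ _ H') _; rewrite ud_small ud0 add0r addr0.
apply: (@ud_cntR _ _ (1 + 2 ^+ m)) => t; exact: cnt_sb_real.
Qed.

Lemma ud_sb2 V M P1 P2 b1 b2 m : uniq P1 -> all (fun j => j < m)%N P1 ->
  uniq P2 -> all (fun j => j < m)%N P2 -> size P1 = size P2 ->
  V `<=` [set y | (y <= M)%N] `|` (fun y => sb P1 b1 y) `|` (fun y => sb P2 b2 y) ->
  ud V <= 2 / 2 ^+ size P1.
Proof.
move=> u1 a1 u2 a2 s12 H.
apply: le_trans (ud_sub3 _ _ _ _ H) _; rewrite ud_small add0r.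
have h1 : ud (fun y => sb P1 b1 y) <= 1 / 2 ^+ size P1.
  apply: (@ud_cntR _ _ (1 + 2 ^+ m)) => t; exact: cnt_sb_real.
have h2 : ud (fun y => sb P2 b2 y) <= 1 / 2 ^+ size P1.
  rewrite s12; apply: (@ud_cntR _ _ (1 + 2 ^+ m)) => t; exact: cnt_sb_real.
have -> : 2 / 2 ^+ size P1 = 1 / 2 ^+ size P1 + 1 / 2 ^+ size P1 :> R.
  by rewrite -mulrDl.
exact: lerD.
Qed.

End Dens2.

Definition c0 : coloring := fun x y => odd (y %/ 2 ^ x).

Lemma mono_sb (p f : nat -> nat) b X w : injective f ->
  (forall u v, p u <> p v -> ecol c0 (f u) (f v) = b) ->
  (forall x, x \in X -> p x <> p w) ->
  (f w <= \max_(x <- X) f x)%N \/ sb (map f X) b (f w).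
Proof.
move=> fi Hc HX; have [le|lt] := leqP (f w) (\max_(x <- X) f x); first by left.
right; rewrite /sb all_map; apply/allP => x xX /=.
have fxw : (f x < f w)%N by apply: leq_ltn_trans lt; exact: leq_bigmax_seq.
have := Hc x w (HX x xX); rewrite /ecol /c0.
have -> : minn (f x) (f w) = f x by apply/minn_idPl; exact: ltnW.
have -> : maxn (f x) (f w) = f w by apply/maxn_idPr; exact: ltnW.
by move=> ->.
Qed.

Lemma infinite_avoid (A : set nat) (s : seq nat) : infinite_set A ->
  exists x, A x /\ x \notin s.
Proof.
move=> Ai; apply: contrapT => H; apply: Ai.
apply: (@sub_finite_set _ _ [set` s]) => // x Ax /=.
apply: contrapT => xs; apply: H; exists x; split => //; exact/negP.
Qed.

Lemma infinite_list (A : set nat) k : infinite_set A ->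
  exists X : seq nat, [/\ uniq X, size X = k & forall x, x \in X -> A x].
Proof.
move=> Ai; elim: k => [|k [X [uX sX AX]]]; first by exists [::].
have [x [Ax xX]] := infinite_avoid A X Ai.
exists (x :: X); split => //=; first by rewrite xX.
  by rewrite sX.
by move=> y; rewrite inE => /orP [/eqP ->|/AX].
Qed.

Lemma finite_labels (p : nat -> nat) (Vs : seq nat) :
  (forall u, u \in Vs -> finite_set (part p (p u))) ->
  finite_set [set v | p v \in map p Vs].
Proof.
elim: Vs => [|u Vs IH] H /=.
  by have -> : [set v | p v \in [::]] = set0 by apply/seteqP; split => x.
have -> : [set v | p v \in p u :: map p Vs] = part p (p u) `|` [set v | p v \in map p Vs].
  apply/seteqP; split => x /=; rewrite inE.
    by case/orP => [/eqP|]; [left|right].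
  by case => [->|->]; rewrite ?eqxx ?orbT.
rewrite finite_setU; split; first by apply: H; rewrite inE eqxx.
by apply: IH => v vV; apply: H; rewrite inE vV orbT.
Qed.

Lemma fpv_list (p : nat -> nat) m : infinite_set (finite_part_vertices p) ->
  exists Vs : seq nat, [/\ uniq (map p Vs), size Vs = m &
    forall u, u \in Vs -> finite_part_vertices p u].
Proof.
move=> Fi; elim: m => [|m [Vs [uV sV FV]]]; first by exists [::].
have : exists v, finite_part_vertices p v /\ p v \notin map p Vs.
  apply: contrapT => H; apply: Fi.
  apply: sub_finite_set (finite_labels p Vs FV) => v Fv /=.
  apply: contrapT => nv; apply: H; exists v; split => //; exact/negP.
move=> [v [Fv vV]]; exists (v :: Vs); split => /=; first by rewrite vV.
  by rewrite sV.
by move=> u; rewrite inE => /orP [/eqP ->|/FV].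
Qed.

Lemma lists_exist (p : nat -> nat) :
  (two_infinite_parts p \/ infinite_set (finite_part_vertices p)) -> forall k,
  exists X Y : seq nat, [/\ uniq X, uniq Y, size X = k, size Y = k &
    forall x y, x \in X -> y \in Y -> p x <> p y].
Proof.
move=> [[i [j [ij [Ii Ij]]]]|Fi] k.
  have [X [uX sX AX]] := infinite_list _ k Ii.
  have [Y [uY sY AY]] := infinite_list _ k Ij.
  exists X, Y; split => // x y /AX + /AY; rewrite /part /= => -> ->; exact.
have [Vs [uV sV _]] := fpv_list p (k + k) Fi.
exists (take k Vs), (drop k Vs).
have uV' := uV; rewrite -(cat_take_drop k Vs) map_cat cat_uniq in uV'.
case/and3P: uV' => u1 dis u2.
split.
- exact: (map_uniq u1).
- exact: (map_uniq u2).
- by rewrite size_take sV; case: ltnP => //; lia.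
- by rewrite size_drop sV addnK.
move=> x y xX yY pxy; move/hasP: dis; apply; exists (p y); first exact: map_f.
by rewrite -pxy; exact: map_f.
Qed.

Section Part1.
Variable R : realType.

Lemma ud_zero V : (forall k, ud R V <= 2 / 2 ^+ k) -> ud R V = 0.
Proof.
move=> H; apply/eqP; rewrite eq_le ud_ge0 andbT; apply/ler_addgt0Pr => e e0.
rewrite add0r; set k := Num.truncn (2 / e).
apply: le_trans (H k) _.
have hk : 2 / e < k.+1%:R.
  by case/andP: (Num.Theory.truncn_itv (ltW (divr_gt0 (ltr0Sn _ 1) e0))).
have h2 : (k.+1 <= 2 ^ k)%N by exact: ltn_expl.
have h2' : k.+1%:R <= 2 ^+ k :> R by rewrite -natrX ler_nat.
have p2 : 0 < 2 ^+ k :> R by rewrite exprn_gt0.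
rewrite ler_pdivrMr // mulrC -ler_pdivrMr //.
apply: le_trans (ltW hk) h2'.
Qed.

Lemma part1 (p : nat -> nat) :
  (two_infinite_parts p \/ infinite_set (finite_part_vertices p)) ->
  exists c : coloring, forall f, mono_copy p c f -> @upper_density R (range f) = 0%E.
Proof.
move=> H; exists c0 => f [[fi fpos] [b Hb]].
rewrite udRE; congr (_%:E); apply: ud_zero => k.
have [X [Y [uX uY sX sY dXY]]] := lists_exist p H k.
set M := (\max_(x <- X ++ Y) f x)%N.
have MX : forall x, x \in X -> (f x <= M)%N.
  by move=> x xX; apply: (leq_bigmax_seq x) => //; rewrite mem_cat xX.
have MY : forall x, x \in Y -> (f x <= M)%N.
  by move=> x xX; apply: (leq_bigmax_seq x) => //; rewrite mem_cat xX orbT.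
have maxX : (\max_(x <- X) f x <= M)%N by apply/bigmax_leqP_seq => x xX _; exact: MX.
have maxY : (\max_(x <- Y) f x <= M)%N by apply/bigmax_leqP_seq => x xX _; exact: MY.
rewrite -sX -(size_map f X).
apply: (@ud_sb2 R _ M (map f X) (map f Y) b b M.+1).
- by rewrite map_inj_uniq.
- by apply/allP => _ /mapP [x xX ->]; rewrite ltnS MX.
- by rewrite map_inj_uniq.
- by apply/allP => _ /mapP [x xX ->]; rewrite ltnS MY.
- by rewrite !size_map sX sY.
move=> _ [w _ <-].
have [HX|HX] := pselect (forall x, x \in X -> p x <> p w).
  case: (mono_sb _ _ _ _ _ fi Hb HX) => h.
    by left; left; rewrite /= (leq_trans h maxX).
  by left; right.
have HY : forall y, y \in Y -> p y <> p w.
  move=> y yY pyw; apply: HX => x xX pxw; apply: (dXY x y xX yY); by rewrite pxw pyw.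
case: (mono_sb _ _ _ _ _ fi Hb HY) => h.
  by left; left; rewrite /= (leq_trans h maxY).
by right.
Qed.

End Part1.

Section Part2U.
Variable R : realType.

Lemma fpv_or_i (p : nat -> nat) i : infinite_set (part p i) ->
  (forall j, infinite_set (part p j) -> j = i) ->
  forall v, p v <> i -> finite_part_vertices p v.
Proof.
move=> Ii Hu v pv; rewrite /finite_part_vertices /=; apply: contrapT => H.
by apply: pv; apply: Hu.
Qed.

Lemma fpv_not_i (p : nat -> nat) i : infinite_set (part p i) ->
  forall v, finite_part_vertices p v -> p v <> i.
Proof. by move=> Ii v Fv pv; apply: Ii; rewrite -pv. Qed.

Lemma part2_upper (p : nat -> nat) n : exactly_one_infinite_part p ->
  (finite_part_vertices p #= `I_n)%card -> (@Rd2 R p <= (1 / 2 ^+ n)%:E)%E.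
Proof.
move=> [i [Ii Hu]] Hc.
have [h [hf hi hs]] : exists h, set_bij `I_n (finite_part_vertices p) h.
  by apply/card_set_bijP; rewrite card_eq_sym.
apply: le_trans (_ : Rd_phi p c0 <= _)%E.
  by apply: ereal_inf_lbound; exists c0.
apply: ub_ereal_sup => _ [f [[fi fpos] [b Hb]] <-].
set X := map h (iota 0 n).
have XF : forall x, x \in X -> finite_part_vertices p x.
  by move=> _ /mapP [k kn ->]; apply: hf; move: kn; rewrite mem_iota.
have uX : uniq X.
  rewrite map_inj_in_uniq ?iota_uniq // => a b' ai bi; apply: hi; rewrite in_setE /=.
    by move: ai; rewrite mem_iota.
  by move: bi; rewrite mem_iota.
set M := (\max_(x <- X) f x)%N.
rewrite udRE lee_fin.
have -> : n = size (map f X) by rewrite !size_map size_iota.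
apply: (@ud_sb1 R _ M (map f X) b M.+1).
- by rewrite map_inj_uniq.
- apply/allP => _ /mapP [x xX ->]; rewrite ltnS.
  by apply: (leq_bigmax_seq x).
move=> _ [w _ <-].
have [pw|pw] := eqVneq (p w) i.
  have HX : forall x, x \in X -> p x <> p w.
    by move=> x /XF Fx; rewrite pw; apply: fpv_not_i p i Ii x Fx.
  case: (mono_sb _ _ _ _ _ fi Hb HX) => H; [by left|by right].
have Fw := fpv_or_i p i Ii Hu w (elimN eqP pw).
have [k kn hk] := hs w Fw.
left; rewrite /= -hk; apply: (leq_bigmax_seq (h k)) => //.
by apply: map_f; rewrite mem_iota.
Qed.

End Part2U.

Fixpoint ok (c : coloring) (L : seq (nat * bool)) (W : set nat) : Prop :=
  if L is (v, col) :: L' then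
    [/\ ~ W v, v \notin map fst L', (forall u, u \in map fst L' -> ecol c v u = col),
        (forall w, W w -> ecol c v w = col) & ok c L' W]
  else True.

Lemma ecolC c x y : ecol c x y = ecol c y x.
Proof. by rewrite /ecol minnC maxnC. Qed.

Lemma ok_filter c L W (P : pred (nat * bool)) : ok c L W -> ok c (seq.filter P L) W.
Proof.
elim: L => [|[v col] L IH] //= [h1 h2 h3 h4 h5].
have sub : forall u, u \in map fst (seq.filter P L) -> u \in map fst L.
  by move=> u /mapP [x]; rewrite mem_filter => /andP [_ xL] ->; exact: map_f.
case: (P (v, col)) => /=; last exact: IH.
split => //; last exact: IH.
- by apply: contra h2; exact: sub.
- by move=> u /sub; exact: h3.
Qed.

Lemma ok_clique c L W b : ok c L W -> all (fun x => x.2 == b) L ->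
  [/\ uniq (map fst L),
      (forall x y, x \in map fst L -> y \in map fst L -> x <> y -> ecol c x y = b),
      (forall x w, x \in map fst L -> W w -> ecol c x w = b) &
      (forall x, x \in map fst L -> ~ W x)].
Proof.
elim: L => [|[v col] L IH] //= [h1 h2 h3 h4 h5] /andP [/eqP colb aL].
have [u1 u2 u3 u4] := IH h5 aL.
split.
- by rewrite h2.
- move=> x y; rewrite !inE => /orP [/eqP ->|xL] /orP [/eqP ->|yL] //.
  + by move=> _; rewrite -colb; apply: h3.
  + by move=> _; rewrite ecolC -colb; apply: h3.
  + exact: u2.
- move=> x w; rewrite inE => /orP [/eqP ->|xL] Ww; first by rewrite -colb; exact: h4.
  exact: u3.
- move=> x; rewrite inE => /orP [/eqP ->|xL] //; exact: u4.
Qed.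

Section Part2L.
Variable R : realType.

Lemma build (c : coloring) k : forall (A : set nat) (a : R), 0 < a -> a <= ud R A ->
  exists L W, [/\ size L = k, W `<=` A, a / 2 ^+ k <= ud R W,
    (forall u, u \in map fst L -> A u) & ok c L W].
Proof.
elim: k => [|k IH] A a a0 aA.
  by exists [::], A; split => //; rewrite expr0 divr1.
have [v Av] : A !=set0 by apply: infinite_setN0; apply: ud_pos_infinite; apply: lt_le_trans aA.
pose A1 col := [set w | A w /\ w <> v /\ ecol c v w = col].
have sub : A `<=` [set y | (y <= v)%N] `|` A1 true `|` A1 false.
  move=> w Aw; have [wv|wv] := leqP w v; first by left; left.
  have wv' : w <> v by move=> E; move: wv; rewrite E ltnn.
  case E: (ecol c v w); [left; right|right]; by split.
have := ud_sub3 R _ _ _ _ sub; rewrite ud_small add0r => Hs.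
have [col Hcol] : exists col, a / 2 <= ud R (A1 col).
  have [h|h] := lerP (a / 2) (ud R (A1 true)); first by exists true.
  exists false; lra.
have [L [W [sL WA hW LA oLW]]] := IH (A1 col) (a / 2) (divr_gt0 a0 (ltr0Sn _ 1)) Hcol.
exists ((v, col) :: L), W; split => //=.
- by rewrite sL.
- by move=> w /WA [Aw _].
- by apply: le_trans hW; rewrite exprS invfM mulrA.
- by move=> u; rewrite inE => /orP [/eqP ->|/LA [Au _]].
split => //.
- by move=> /WA [_ [H _]].
- by apply/negP => /LA [_ [H _]].
- by move=> u /LA [_ [_ H]].
- by move=> w /WA [_ [_ H]].
Qed.


Lemma part2_lower (p : nat -> nat) n : (1 <= n)%N -> exactly_one_infinite_part p ->
  (finite_part_vertices p #= `I_n)%card ->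
  ((1 / 2 ^+ (2 * n - 1))%:E <= @Rd2 R p)%E.
Proof.
move=> n1 [i [Ii Hu]] Hc.
have [g [gf gi gs]] : exists g, set_bij (finite_part_vertices p) `I_n g.
  by apply/card_set_bijP.
apply: le_ereal_inf_tmp => _ [c _ <-].
have pos1 : 1 <= ud R [set i | (0 < i)%N] by rewrite ud_positives.
have [L [W [sL WA hW LA oLW]]] := build c (2 * n - 1) [set i | (0 < i)%N] 1 ltr01 pos1.
set b := (n <= count snd L)%N.
set L' := seq.filter (fun x => x.2 == b) L.
have oL' : ok c L' W by exact: ok_filter.
have aL' : all (fun x => x.2 == b) L' by apply: filter_all.
have [u1 u2 u3 u4] := ok_clique _ _ _ _ oL' aL'.
set xs := map fst L'.
have sxs : (n <= size xs)%N.
  rewrite size_map size_filter /b; case: (leqP n (count snd L)) => h.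
    by rewrite (@eq_count _ _ snd) // => x; rewrite eqb_id.
  rewrite (@eq_count _ _ (predC snd)); last by move=> x; rewrite eqbF_neg.
  have := count_predC snd L; rewrite sL; lia.
have xsA : forall x, x \in xs -> (0 < x)%N.
  move=> x /mapP [y]; rewrite mem_filter => /andP [_ yL] ->; apply: LA; exact: map_f.
have Wpos : 0 < ud R W by apply: lt_le_trans hW; rewrite mul1r invr_gt0 exprn_gt0.
have Winf := ud_pos_infinite _ _ Wpos.
have [h [hf hi hs]] : exists h, set_bij (part p i) W h.
  apply/card_set_bijP; apply: (card_eq_trans (eq_card_nat (countableP _) Ii)).
  by rewrite card_eq_sym; exact: eq_card_nat (countableP _) Winf.
pose f v := if p v == i then h v else nth 0%N xs (g v).
have gn : forall v, p v <> i -> (g v < size xs)%N.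
  move=> v pv; apply: leq_trans sxs; exact: (gf v (fpv_or_i p i Ii Hu v pv)).
have fxs : forall v, p v <> i -> f v \in xs.
  by move=> v pv; rewrite /f (introF eqP pv); apply: mem_nth; exact: gn.
have fW : forall v, p v = i -> W (f v).
  by move=> v pv; rewrite /f pv eqxx; apply: hf.
have finj : injective f.
  move=> u v; have [pu|pu] := eqVneq (p u) i; have [pv|pv] := eqVneq (p v) i.
  - rewrite /f pu pv eqxx => E; apply: hi => //; rewrite in_setE //.
  - move=> E; have := fW u pu; rewrite E => Wv; exfalso; apply: (u4 _ (fxs v (elimN eqP pv))) Wv.
  - move=> E; have := fW v pv; rewrite -E => Wv; exfalso; apply: (u4 _ (fxs u (elimN eqP pu))) Wv.
  - rewrite /f (negPf pu) (negPf pv) => /eqP.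
    rewrite nth_uniq ?gn //; try exact/eqP.
    move=> /eqP E; apply: gi => //; rewrite in_setE; apply: (fpv_or_i p i Ii Hu); exact/eqP.
have Hmono : mono_copy p c f.
  split; first split => //.
    move=> v; have [pv|pv] := eqVneq (p v) i.
      by have := WA _ (fW v pv).
    exact: xsA (fxs v (elimN eqP pv)).
  exists b => u v puv.
  have [pu|pu] := eqVneq (p u) i; have [pv|pv] := eqVneq (p v) i.
  - by exfalso; apply: puv; rewrite pu pv.
  - by rewrite ecolC; apply: u3 (fxs v (elimN eqP pv)) (fW u pu).
  - exact: u3 (fxs u (elimN eqP pu)) (fW v pv).
  - apply: u2; [exact: fxs u (elimN eqP pu) | exact: fxs v (elimN eqP pv) |].
    move=> E; apply: puv; by rewrite (finj _ _ E).
have Hup : (@upper_density R (range f) <= Rd_phi p c)%E by rewrite /Rd_phi; apply: ereal_sup_ubound; exists f.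
apply: le_trans Hup; rewrite udRE lee_fin; apply: le_trans hW _.
apply: ud_sub => w Ww; have [v pv <-] := hs w Ww.
by exists v => //; rewrite /f pv eqxx.
Qed.

End Part2L.


Theorem mainTheorem8 (R : realType) (p : nat -> nat) :
  ((two_infinite_parts p \/ infinite_set (finite_part_vertices p)) ->
     exists c : coloring, forall f, mono_copy p c f ->
       @upper_density R (range f) = 0%E) /\
  (forall n : nat, (1 <= n)%N ->
     exactly_one_infinite_part p ->
     (finite_part_vertices p #= `I_n)%card ->
     ((1 / 2 ^+ (2 * n - 1))%:E <= @Rd2 R p /\
      @Rd2 R p <= (1 / 2 ^+ n)%:E)%E).
Proof.
split; first exact: part1.
move=> n n1 H Hc; split; first exact: part2_lower.
exact: part2_upper.
Qed.
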